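(* Consider an RBM with observed variables $X\in\{-1,1\}^n$ and width $\beta^*$ as in the context, and let $\gamma^*$ be the modified width of the MRF of the observed variables. Then $\gamma^*\le\beta^*$.
   Context: RBM: $\mathbb{P}(X=x,Y=y)\propto\exp(x^TJy+h^Tx+g^Ty)$ over observed $X\in\{-1,1\}^n$ and latent $Y\in\{-1,1\}^m$, $J\in\mathbb{R}^{n\times m}$, $h\in\mathbb{R}^n$, $g\in\mathbb{R}^m$. Its width is $\beta^*:=\max\big(\max_{i\in[n]}\sum_{j=1}^m|J_{i,j}|+|h_i|,\ \max_{j\in[m]}\sum_{i=1}^n|J_{i,j}|+|g_j|\big)$. The marginal of $X$ is $\propto\exp(f(x))$, $f(x)=\sum_j\rho(J_j\cdot x+g_j)+h^Tx$, $\rho(t)=\log(e^t+e^{-t})$, $J_j$ the $j$-th column of $J$; $f=\sum_{T\subseteq[n]}\hat f(T)\chi_T$, $\chi_T(x)=\prod_{i\in T}x_i$. The modified width is $\gamma^*:=\max_{u\in[n]}\max_{I\subseteq[n]\setminus\{u\}}\max_{x\in\{-1,1\}^n}\big|\sum_{T\subseteq I}\hat f(T\cup\{u\})\chi_{T\cup\{u\}}(x)\big|$. *)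

(* Defs.v *)
From HB Require Import structures.
From mathcomp Require Import all_boot all_order all_algebra.
From mathcomp Require Import reals sequences exp.
Set Implicit Arguments. Unset Strict Implicit. Unset Printing Implicit Defensive.
Import Order.TTheory GRing.Theory Num.Theory.
Local Open Scope ring_scope.

Section RBM.
Variable R : realType.

(* A point x of {-1,1}^n is encoded as x : {ffun 'I_n -> bool}, with
   coordinate value spin (x i) (true |-> 1, false |-> -1). *)
Definition spin (b : bool) : R := if b then 1 else -1.

Definition cube (n : nat) := {ffun 'I_n -> bool}.

Definition chi (n : nat) (T : {set 'I_n}) (x : cube n) : R :=
  \prod_(i in T) spin (x i).

Definition rho (t : R) : R := ln (expR t + expR (- t)).

Definition rbm_f (n m : nat) (J : 'M[R]_(n, m)) (h : 'I_n -> R) (g : 'I_m -> R)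
  (x : cube n) : R :=
  \sum_(j < m) rho (\sum_(i < n) J i j * spin (x i) + g j)
  + \sum_(i < n) h i * spin (x i).

Definition fourier (n : nat) (f : cube n -> R) (T : {set 'I_n}) : R :=
  (2 ^+ n)^-1 * \sum_(x : cube n) f x * chi T x.

Definition rbm_width (n m : nat) (J : 'M[R]_(n, m)) (h : 'I_n -> R)
  (g : 'I_m -> R) : R :=
  Num.max (\big[Num.max/0]_(i < n) (\sum_(j < m) `|J i j| + `|h i|))
          (\big[Num.max/0]_(j < m) (\sum_(i < n) `|J i j| + `|g j|)).

(* modified width gamma* (all quantities maximized are >= 0, so 0 is a
   harmless identity for the iterated max) *)
Definition mod_width (n : nat) (f : cube n -> R) : R :=
  \big[Num.max/0]_(u : 'I_n)
   \big[Num.max/0]_(I : {set 'I_n} | u \notin I)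
    \big[Num.max/0]_(x : cube n)
      `| \sum_(T : {set 'I_n} | T \subset I) fourier f (u |: T) * chi (u |: T) x |.

End RBM.

(* Main.v *)
Require Import Defs.
From HB Require Import structures.
From mathcomp Require Import all_boot all_order all_algebra.
From mathcomp Require Import reals sequences exp.
From mathcomp Require Import ring lra.
Import Order.TTheory GRing.Theory Num.Theory.
Local Open Scope ring_scope.

Section Aux.
Variable R : realType.
Variable n : nat.

Definition flip (i : 'I_n) (y : cube n) : cube n :=
  [ffun j => if j == i then ~~ y j else y j].

Lemma flipK i : involutive (flip i).
Proof. move=> y; apply/ffunP=> j; rewrite !ffunE; case: (j == i) => //=; exact: negbK. Qed.

Lemma spinN b : spin R (~~ b) = - spin R b.
Proof. by case: b; rewrite /spin ?opprK. Qed.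

Lemma chi_flip_in (T : {set 'I_n}) i y : i \in T -> chi R T (flip i y) = - chi R T y.
Proof.
move=> iT; rewrite /chi (bigD1 i) //= [in RHS](bigD1 i) //= ffunE eqxx spinN mulNr.
congr (- (_ * _)); apply: eq_bigr => j /andP[_ ji]; by rewrite ffunE (negbTE ji).
Qed.

Lemma chi_flip_out (T : {set 'I_n}) i y : i \notin T -> chi R T (flip i y) = chi R T y.
Proof.
move=> iT; rewrite /chi; apply: eq_bigr => j jT; rewrite ffunE.
by have/negbTE->: j != i by apply: contraNneq iT => <-.
Qed.

Lemma sum_chi (T : {set 'I_n}) :
  \sum_(y : cube n) chi R T y = if T == set0 then 2 ^+ n else 0.
Proof.
case: eqP => [->|/eqP /set0Pn [i iT]].
  under eq_bigr do rewrite /chi big_set0.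
  by rewrite sumr_const card_ffun card_bool card_ord natrX.
set s := \sum_y _.
have : s = - s.
  rewrite {1}/s (reindex_inj (can_inj (flipK i))) /=.
  under eq_bigr do rewrite chi_flip_in //.
  by rewrite sumrN.
move=> Hs; lra.
Qed.

Definition hset (i : 'I_n) (T : {set 'I_n}) := if i \in T then T :\ i else i |: T.

Lemma hsetK i : involutive (hset i).
Proof.
move=> T; rewrite /hset; case: (boolP (i \in T)) => iT.
  by rewrite setD1K // setD11.
by rewrite setU11 setU1K.
Qed.

Lemma K_ge0 (I : {set 'I_n}) z : 0 <= \sum_(T : {set 'I_n} | T \subset I) chi R T z.
Proof.
case: (boolP [exists i in I, ~~ z i]) => [/existsP [i /andP [iI zi]] | /existsPn H].
  set s := \sum_(T | _) _.
  suff : s = - s by move=> Hs; lra.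
  rewrite {1}/s (reindex_inj (can_inj (hsetK i))) /=.
  have HP : forall T, (hset i T \subset I) = (T \subset I).
    move=> T; rewrite /hset; case: (boolP (i \in T)) => iT.
      apply/idP/idP => HT; [by rewrite -(setD1K iT) subUset sub1set iI HT | exact: subset_trans (subD1set T i) HT].
    by rewrite subUset sub1set iI.
  rewrite (eq_bigl _ _ HP) -sumrN; apply: eq_bigr => T _.
  rewrite /hset /chi; case: (boolP (i \in T)) => iT.
    by rewrite [in RHS](bigD1 i) //= (negbTE zi) /spin mulN1r opprK; apply: eq_bigl => j; rewrite !inE andbC.
  by rewrite big_setU1 //= (negbTE zi) /spin mulN1r.
apply: sumr_ge0 => T TI; apply: prodr_ge0 => j jT.
move: (H j); rewrite (subsetP TI j jT) /= negbK => ->; rewrite /spin; lra.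
Qed.


Definition zf (x y : cube n) : cube n := [ffun i => x i == y i].

Lemma normspin b : `|spin R b| = 1.
Proof. by case: b; rewrite /spin ?normrN normr1. Qed.

Lemma chiM (T : {set 'I_n}) x y : chi R T x * chi R T y = chi R T (zf x y).
Proof.
rewrite /chi -big_split; apply: eq_bigr => i _; rewrite ffunE.
by case: (x i); case: (y i); rewrite /spin /=; ring.
Qed.

Lemma zf_flip x y u : zf x (flip u y) = flip u (zf x y).
Proof.
apply/ffunP => i; rewrite !ffunE; case: (i == u) => //.
by case: (x i); case: (y i).
Qed.

Lemma key (F : cube n -> R) (u : 'I_n) (I : {set 'I_n}) (x : cube n) (B : R) :
  u \notin I -> (forall y, `|F y - F (flip u y)| <= 2 * B) ->
  `|\sum_(T : {set 'I_n} | T \subset I) fourier F (u |: T) * chi R (u |: T) x| <= B.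
Proof.
move=> uI HB.
pose K := fun y => \sum_(T : {set 'I_n} | T \subset I) chi R T (zf x y).
have stepA : \sum_(T : {set 'I_n} | T \subset I) fourier F (u |: T) * chi R (u |: T) x
   = (2 ^+ n)^-1 * spin R (x u) * \sum_y F y * spin R (y u) * K y.
  have E : forall T : {set 'I_n}, T \subset I -> fourier F (u |: T) * chi R (u |: T) x =
      \sum_y (2 ^+ n)^-1 * spin R (x u) * (F y * spin R (y u) * chi R T (zf x y)).
    move=> T TI; have uT : u \notin T by apply: contra uI; apply: (subsetP TI).
    rewrite /fourier -mulrA mulr_suml mulr_sumr; apply: eq_bigr => y _.
    rewrite -chiM /chi !big_setU1 //=; ring.
  rewrite (eq_bigr _ E) mulr_sumr exchange_big /=; apply: eq_bigr => y _.
  rewrite /K !mulr_sumr; apply: eq_bigr => T _; ring.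
have KF : forall y, K (flip u y) = K y.
  move=> y; rewrite /K; apply: eq_bigr => T TI.
  rewrite zf_flip chi_flip_out //; apply: contra uI; apply: (subsetP TI).
have stepB : \sum_y (F y - F (flip u y)) * spin R (y u) * K y
    = 2 * \sum_y F y * spin R (y u) * K y.
  have H : \sum_y F (flip u y) * spin R (y u) * K y = - \sum_y F y * spin R (y u) * K y.
    rewrite [in RHS](reindex_inj (can_inj (flipK u))) /= -sumrN; apply: eq_bigr => y _.
    rewrite KF ffunE eqxx spinN; ring.
  under eq_bigr do rewrite !mulrBl.
  rewrite sumrB H; ring.
have Ksum : \sum_y K y = 2 ^+ n.
  rewrite /K exchange_big /=.
  under eq_bigr => T _ do (under eq_bigr do rewrite -chiM; rewrite -mulr_sumr sum_chi).
  rewrite (bigD1 set0) ?sub0set //= eqxx big1 => [|T /andP[_ /negbTE ->]]; last by rewrite mulr0.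
  by rewrite /chi big_set0 mul1r addr0.
have Kge : forall y, 0 <= K y := fun y => K_ge0 I (zf x y).
have H2 : `|2 * \sum_y F y * spin R (y u) * K y| <= 2 * B * 2 ^+ n.
  rewrite -stepB -Ksum mulr_sumr; apply: le_trans (ler_norm_sum _ _ _) _.
  apply: ler_sum => y _; rewrite !normrM normspin mulr1 (ger0_norm (Kge y)).
  by apply: ler_wpM2r; [exact: Kge | exact: HB].
have pN : 0 < 2 ^+ n :> R by apply: exprn_gt0.
rewrite stepA !normrM normspin mulr1 ger0_norm; last by rewrite invr_ge0 ltW.
rewrite mulrC ler_pdivrMr //.
move: H2; rewrite normrM ger0_norm //; lra.
Qed.


Lemma rho_le (a b : R) : rho a <= rho b + `|a - b|.
Proof.
have p2 : 0 < expR b + expR (- b) by rewrite addr_gt0 ?expR_gt0.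
rewrite /rho -[`|a - b|]expRK -lnM ?posrE ?expR_gt0 //.
rewrite ler_ln ?posrE ?mulr_gt0 ?addr_gt0 ?expR_gt0 //.
rewrite mulrDl -!expRD lerD // ler_expR.
  have := ler_norm (a - b); lra.
have := ler_norm (b - a); rewrite distrC; lra.
Qed.

Lemma rho_lip (a b : R) : `|rho a - rho b| <= `|a - b|.
Proof.
rewrite ler_norml; have h1 := rho_le a b; have h2 := rho_le b a.
rewrite (distrC b a) in h2; apply/andP; split; lra.
Qed.

Lemma lin_diff (c : 'I_n -> R) (y : cube n) u :
  \sum_i c i * spin R (y i) - \sum_i c i * spin R (flip u y i) = c u * (2 * spin R (y u)).
Proof.
rewrite -sumrB (bigD1 u) //= big1 ?addr0 => [|i iu]; last by rewrite ffunE (negbTE iu) subrr.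
rewrite ffunE eqxx spinN; ring.
Qed.

Lemma norm2s b : `|2 * spin R b| = 2.
Proof. by rewrite normrM normspin mulr1 ger0_norm. Qed.

Lemma F_lip (m : nat) (J : 'M[R]_(n, m)) (h : 'I_n -> R) (g : 'I_m -> R) y u :
  `|rbm_f J h g y - rbm_f J h g (flip u y)| <= 2 * (\sum_j `|J u j| + `|h u|).
Proof.
rewrite /rbm_f opprD addrACA -sumrB lin_diff.
apply: le_trans (ler_normD _ _) _; rewrite mulrDr lerD //; last first.
  by rewrite normrM norm2s mulrC.
apply: le_trans (ler_norm_sum _ _ _) _; rewrite mulr_sumr; apply: ler_sum => j _.
apply: le_trans (rho_lip _ _) _.
by rewrite opprD addrACA subrr addr0 lin_diff normrM norm2s mulrC.
Qed.

End Aux.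

Theorem lemma24 (R : realType) (n m : nat) (J : 'M[R]_(n, m))
  (h : 'I_n -> R) (g : 'I_m -> R) :
  mod_width (rbm_f J h g) <= rbm_width J h g.
Proof.
have bigmax_le : forall (I : finType) (P : pred I) (G : I -> R) c, 0 <= c ->
    (forall i, P i -> G i <= c) -> \big[Num.max/0]_(i | P i) G i <= c.
  move=> I P G c c0 HG; elim/big_ind: _ => //; by move=> a b ha hb; rewrite ge_max ha hb.
have W0 : 0 <= rbm_width J h g.
  rewrite /rbm_width le_max; apply/orP; left.
  elim/big_ind: _ => //; first by move=> a b ha hb; rewrite le_max ha.
  by move=> i _; rewrite addr_ge0 ?sumr_ge0.
rewrite /mod_width.
have mx : forall a b : R, a <= rbm_width J h g -> b <= rbm_width J h g -> Num.max a b <= rbm_width J h g.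
  by move=> a b ha hb; rewrite ge_max ha hb.
elim/big_ind: _ => // u _; elim/big_ind: _ => // I uI; elim/big_ind: _ => // x _.
have HB := fun y => @F_lip R n m J h g y u.
apply: le_trans (@key R n _ u I x _ uI HB) _.
rewrite /rbm_width le_max; apply/orP; left.
by rewrite (bigD1 u) //= le_max lexx.
Qed.
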